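(* Let $\Phi=(G,\varphi)$ be a complex unit gain graph with a pendant vertex $u$ whose unique neighbour is $v$, and let $F^{\varphi}=\Phi-u-v$ with underlying graph $F=G-u-v$. If $r(\Phi)=r(G)+2\theta(G)$ (respectively $r(\Phi)=r(G)-2\theta(G)$), then $v$ does not lie on any cycle of $G$, and $r(F^{\varphi})=r(F)+2\theta(F)$ (respectively $r(F^{\varphi})=r(F)-2\theta(F)$).
   Context: A complex unit gain graph $\Phi=(G,\varphi)$ consists of a finite simple graph $G$ with vertex set $\{v_1,\dots,v_n\}$ and a gain function $\varphi$ assigning to each oriented edge $e_{ij}$ ($v_iv_j\in E(G)$) a complex number of modulus $1$ with $\varphi(e_{ji})=\overline{\varphi(e_{ij})}$. $A(\Phi)$ is the Hermitian matrix with $(i,j)$ entry $\varphi(e_{ij})$ if $v_iv_j\in E(G)$ and $0$ otherwise; $r(\Phi)$ is its rank; $r(\cdot)$ of a simple graph is the rank of its $0$-$1$ adjacency matrix. Induced subgraphs of $\Phi$ (such as $\Phi-u-v$, obtained by deleting $u,v$ and incident edges) carry the gains of $\Phi$. $\theta(G)=|E(G)|-|V(G)|+\omega(G)$, $\omega(G)$ the number of components. A pendant vertex is a vertex of degree $1$. *)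

(* Defs.v *)
From HB Require Import structures.
From mathcomp Require Import all_boot all_order all_algebra.
From mathcomp Require Import reals complex.
Set Implicit Arguments. Unset Strict Implicit. Unset Printing Implicit Defensive.
Import Order.TTheory GRing.Theory Num.Theory.
Local Open Scope ring_scope.

Section Defs.
Variable T : finType.

Definition simple_graph (G : rel T) : Prop := symmetric G /\ irreflexive G.

Definition unit_gain (C : numClosedFieldType) (G : rel T) (phi : T -> T -> C) : Prop :=
  forall x y, G x y -> `|phi x y| = 1 /\ phi y x = (phi x y)^*.

Definition gain_adj (C : numClosedFieldType) (G : rel T) (phi : T -> T -> C)
  : 'M[C]_#|T| :=
  \matrix_(i, j) (if G (enum_val i) (enum_val j)
                  then phi (enum_val i) (enum_val j) else 0).

Definition gain_rank (C : numClosedFieldType) (G : rel T) (phi : T -> T -> C) : nat :=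
  \rank (gain_adj G phi).

Definition graph_rank (C : numClosedFieldType) (G : rel T) : nat :=
  \rank (gain_adj G (fun _ _ => 1 : C)).

Definition degree (G : rel T) (x : T) : nat := #|[set y | G x y]|.

Definition edges (G : rel T) : {set {set T}} :=
  [set e : {set T} | [exists x, exists y, G x y && (e == [set x; y])]].

Definition ncomp (G : rel T) : nat := n_comp G T.

Definition theta (G : rel T) : int :=
  (#|edges G|%:Z - #|T|%:Z + (ncomp G)%:Z)%R.

Definition on_cycle (G : rel T) (v : T) : Prop :=
  exists p : seq T, [/\ uniq (v :: p), (2 <= size p)%N & cycle G (v :: p)].

End Defs.

Definition del2_vert (T : finType) (u v : T) := {x : T | x \notin [set u; v]}.

Definition del2_graph (T : finType) (u v : T) (G : rel T) : rel (del2_vert u v) :=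
  fun x y => G (val x) (val y).

Definition del2_gain (T : finType) (u v : T) (C : Type) (phi : T -> T -> C)
  : del2_vert u v -> del2_vert u v -> C :=
  fun x y => phi (val x) (val y).
Arguments del2_graph {T} u v G.
Arguments del2_gain {T} u v {C} phi.

(* Main.v *)
Require Import Defs.
From HB Require Import structures.
From mathcomp Require Import all_boot all_order all_algebra.
From mathcomp Require Import reals complex.
From mathcomp Require Import ring zify.
From Stdlib Require Import Classical.
Set Implicit Arguments. Unset Strict Implicit. Unset Printing Implicit Defensive.
Import Order.TTheory GRing.Theory Num.Theory.

Section Graph.
Variable T : finType.
Variable G : rel T.
Hypothesis Gsym : symmetric G.
Hypothesis Girr : irreflexive G.

Definition restrict (S : {set T}) : rel T := fun x y => [&& x \in S, y \in S & G x y].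
Definition edgesS (S : {set T}) := [set e in edges G | e \subset S].
Definition nbrs (S : {set T}) x := [set y in S | G x y].
Definition ncompS (S : {set T}) := n_comp (restrict S) S.
Definition thetaS (S : {set T}) : int := (#|edgesS S|%:Z - #|S|%:Z + (ncompS S)%:Z)%R.

Lemma restrict_sym (S : {set T}) : connect_sym (restrict S).
Proof.
apply: sym_connect_sym => x y; rewrite /restrict Gsym.
by case: (x \in S); case: (y \in S).
Qed.

Lemma restrict_closed (S : {set T}) : closed (restrict S) S.
Proof.
move=> x y /and3P [xS yS _]; by rewrite xS yS.
Qed.

Lemma connect_in (S : {set T}) (x y : T) : x \in S -> connect (restrict S) x y -> y \in S.
Proof.
move=> xS c; by rewrite -(closed_connect (@restrict_closed S) c).
Qed.

Lemma ncomp_imset (S : {set T}) : ncompS S = #|fingraph.root (restrict S) @: S|.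
Proof.
rewrite /ncompS /n_comp_mem; apply: eq_card => y; rewrite !inE.
apply/andP/imsetP => [[/eqP ry yS] | [z zS ->]].
  by exists y.
split; first exact: fingraph.roots_root (@restrict_sym S) _.
exact: connect_in zS (connect_root _ _).
Qed.

Lemma comp_add (S : {set T}) (x : T) (k : nat) : x \notin S ->
  #|fingraph.root (restrict S) @: nbrs S x| <= k ->
  ncompS S + 1 <= k + ncompS (x |: S).
Proof.
move=> xS hk.
set e := restrict S; set e' := restrict (x |: S).
set r := fingraph.root e; set r' := fingraph.root e'; set N := nbrs S x.
set Roots := r @: S.
set Q := Roots :\: r @: N.
have symE := @restrict_sym S; have symE' := @restrict_sym (x |: S).
have QS : {subset Q <= S}.
  move=> y; rewrite !inE => /andP [_ /imsetP [z zS ->]].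
  exact: connect_in zS (connect_root _ _).
have Qroot : forall y, y \in Q -> r y = y.
  move=> y; rewrite !inE => /andP [_ /imsetP [z zS ->]].
  exact: fingraph.root_root.
have Key : forall y w, y \in Q -> connect e' y w -> connect e y w.
  move=> y w yQ cyw.
  have cl : closed e' [pred w | connect e y w].
    apply: intro_closed => // w1 w2 /and3P [w1S w2S Gw] /= cw1.
    have w1S' : w1 \in S := connect_in (QS _ yQ) cw1.
    move: w2S; rewrite in_setU1 => /orP [/eqP w2x | w2S].
      exfalso; have yQ' := yQ; move: yQ'; rewrite !inE => /andP [/negP []].
      apply/imsetP; exists w1; first by rewrite !inE w1S' /= Gsym -w2x.
      by rewrite -[y in y = _](Qroot y yQ); apply/(fingraph.rootP symE).
    by apply: connect_trans cw1 (connect1 _); rewrite /e /restrict w1S' w2S.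
  by have := closed_connect cl cyw; rewrite !inE connect0 => <-.
have inj : {in x |: Q &, injective r'}.
  move=> y1 y2; rewrite !in_setU1 => /orP [/eqP -> | y1Q] /orP [/eqP -> | y2Q] //
     /(fingraph.rootP symE') c.
  - rewrite symE' in c.
    by have := connect_in (QS _ y2Q) (Key _ _ y2Q c); rewrite (negbTE xS).
  - by have := connect_in (QS _ y1Q) (Key _ _ y1Q c); rewrite (negbTE xS).
  - by rewrite -(Qroot _ y1Q) -(Qroot _ y2Q); apply/(fingraph.rootP symE); apply: Key.
have card1 : #|Q| + 1 <= ncompS (x |: S).
  rewrite ncomp_imset -/e' -/r'.
  have -> : (#|Q| + 1 = #|x |: Q|)%N.
    rewrite cardsU1 addnC; congr (_ + _)%N.
    have -> : x \notin Q by apply/negP => /QS; rewrite (negbTE xS).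
    by [].
  rewrite -(card_in_imset inj); apply: subset_leq_card; apply: imsetS.
  apply/subsetP => y; rewrite !in_setU1 => /orP [-> // | /QS ->]; by rewrite orbT.
have : ncompS S = (#|Roots :&: r @: N| + #|Q|)%N by rewrite cardsID ncomp_imset.
have : #|Roots :&: r @: N| <= #|r @: N| by apply: subset_leq_card; apply: subsetIr.
have hk' : #|r @: N| <= k := hk.
lia.
Qed.

Lemma in_edges (x y : T) : G x y -> [set x; y] \in edges G.
Proof.
move=> Gxy; rewrite inE; apply/existsP; exists x; apply/existsP; exists y.
by rewrite Gxy eqxx.
Qed.

Lemma edges_add (S : {set T}) (x : T) : x \notin S ->
  #|edgesS S| + #|nbrs S x| <= #|edgesS (x |: S)|.
Proof.
move=> xS; set N := nbrs S x; set B := [set [set x; y] | y in N].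
have NS : forall y, y \in N -> (y \in S) && G x y by move=> y; rewrite inE.
have cB : #|B| = #|N|.
  apply: card_in_imset => y1 y2 /NS /andP [y1S _] /NS /andP [y2S _] E.
  have : y1 \in [set x; y2] by rewrite -E !inE eqxx orbT.
  rewrite !inE => /orP [/eqP e1 | /eqP //].
  by move: xS; rewrite -e1 y1S.
have dis : edgesS S :&: B = set0.
  apply/setP => e; rewrite !inE; apply/negP => /andP [/andP [_ sub] /imsetP [y _ ey]].
  by move: xS; rewrite (subsetP sub x) // ey !inE eqxx.
have sub : edgesS S :|: B \subset edgesS (x |: S).
  apply/subsetP => e; rewrite !inE => /orP [/andP [eE eS] | /imsetP [y /NS /andP [yS Gxy] ->]].
    rewrite eE /=; apply: subset_trans eS _; exact: subsetUr.
  have := in_edges Gxy; rewrite inE => -> /=.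
  apply/subsetP => z; rewrite !inE => /orP [/eqP -> | /eqP ->]; first by rewrite eqxx.
  by rewrite yS orbT.
rewrite -cB; have := cardsU (edgesS S) B; rewrite dis cards0 subn0 => <-.
exact: subset_leq_card sub.
Qed.

Lemma theta_add (S : {set T}) (x : T) : x \notin S ->
  (thetaS S <= thetaS (x |: S))%R.
Proof.
move=> xS; have E := edges_add xS.
have C := comp_add xS (leq_imset_card (fingraph.root (restrict S)) (nbrs S x)).
rewrite /thetaS cardsU1 xS /=.
move: E C; move: #|edgesS S| #|edgesS (x |: S)| #|S| (ncompS S) (ncompS (x |: S)) #|nbrs S x| => a b c d e f; lia.
Qed.

Lemma theta_add_strict (S : {set T}) (x a b : T) : x \notin S ->
  a != b -> a \in S -> b \in S -> G x a -> G x b -> connect (restrict S) a b ->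
  (thetaS S + 1 <= thetaS (x |: S))%R.
Proof.
move=> xS ab aS bS Ga Gb cab; have E := edges_add xS.
set N := nbrs S x.
have bN : b \in N by rewrite inE bS Gb.
have aN : a \in N :\ b by rewrite !inE ab aS Ga.
have cN : #|fingraph.root (restrict S) @: N| <= #|N :\ b|.
  apply: leq_trans (leq_imset_card (fingraph.root (restrict S)) (N :\ b)); apply: subset_leq_card.
  apply/subsetP => z /imsetP [y yN ->]; case: (eqVneq y b) => [-> | yb].
    apply/imsetP; exists a => //; apply/esym/(fingraph.rootP (@restrict_sym S)); exact: cab.
  by apply/imsetP; exists y => //; rewrite in_setD1 yb yN.
have C := comp_add xS cN.
have := cardsD1 b N; rewrite bN /= => cD.
rewrite /thetaS cardsU1 xS /=.
move: E C cD; move: #|edgesS S| #|edgesS (x |: S)| #|S| (ncompS S) (ncompS (x |: S)) #|N| #|N :\ b| => a0 b0 c0 d0 e0 f0 g0; lia.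
Qed.

Lemma path_in (S : {set T}) (x : T) (q : seq T) :
  path (restrict S) x q -> all (fun w => w \in S) q.
Proof.
elim: q x => //= y q IH x /andP [/and3P [_ yS _] p]; by rewrite yS (IH y p).
Qed.

Lemma exists_cyc (S : {set T}) : S != set0 ->
  (forall x, x \in S -> 2 <= #|nbrs S x|) ->
  exists x a b, [/\ x \in S, a != b, a \in S :\ x & b \in S :\ x] /\
     [/\ G x a, G x b & connect (restrict (S :\ x)) a b].
Proof.
move=> Sn deg.
have step : forall x y, x \in S -> exists z, [/\ z \in S, G x z & z != y].
  move=> x y xS; have := deg x xS; rewrite (cardsD1 y) => h.
  have : 0 < #|nbrs S x :\ y| by move: h; case: (y \in nbrs S x); rewrite ?add1n ?add0n // => /ltnW.
  rewrite card_gt0 => /set0Pn [z]; rewrite !inE => /and3P [zy zS Gz].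
  by exists z.
apply: NNPP => H.
suff : forall n, exists x q, [/\ x \in S, size q = n, uniq (x :: q) & path (restrict S) x q].
  move=> /(_ #|S|) [x [q [xS sq uq pq]]].
  have : size (x :: q) <= size (enum S).
    apply: uniq_leq_size => // w; rewrite mem_enum inE => /orP [/eqP -> // | wq].
    by have := path_in pq => /allP /(_ w wq).
  by rewrite -cardE /= sq ltnn.
elim => [|n [x [q [xS sq uq pq]]]].
  by have /set0Pn [x xS] := Sn; exists x, [::].
have [z [zS Gz zh]] := step x (head x q) xS.
case: (boolP (z \in x :: q)) => zq; last first.
  exists z, (x :: q); split => //=; first by rewrite sq.
    by rewrite zq.
  by rewrite pq /restrict zS xS Gsym Gz.
exfalso; move: zq; rewrite inE => /orP [/eqP zx | zq].
  by move: Gz; rewrite zx Girr.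
case: q sq uq pq zh zq => [//|y q'] sq uq pq /= zh zq.
move: pq => /= /andP [/and3P [_ yS Gy] pq'].
have allq := path_in pq'.
move: uq => /= /andP [xq uq].
apply: H; exists x, y, z; split; split => //.
- by rewrite eq_sym.
- rewrite in_setD1 yS andbT; apply: contraNneq xq => ->; exact: mem_head.
- rewrite in_setD1 zS andbT; apply: contraNneq xq => <-; exact: zq.
- apply: (path_connect (e := restrict (S :\ x)) (p := q')); last by [].
  apply: (sub_in_path (P := fun w => (w \in S) && (w != x)) (e := restrict S)).
  + move=> w1 w2 /andP [w1S w1x] /andP [w2S w2x] /and3P [_ _ Gw].
    by rewrite /restrict !in_setD1 w1S w2S w1x w2x Gw.
  + rewrite /= yS; apply/andP; split.
      by apply: contraNneq xq => ->; exact: mem_head.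
    apply/allP => w wq'; move: allq => /allP /(_ w wq') -> /=.
    by apply: contraNneq xq => <-; rewrite inE wq' orbT.
  + exact: pq'.
Qed.

Lemma theta_setT : theta G = thetaS setT.
Proof.
rewrite /theta /thetaS cardsT.
have -> : edgesS setT = edges G by apply/setP => e; rewrite /edgesS in_set subsetT andbT.
have -> : ncomp G = ncompS setT.
  rewrite /ncomp /ncompS (@eq_n_comp_r _ _ setT (mem T)); last by move=> z; rewrite !inE.
  apply: eq_n_comp; apply: eq_connect => x y; by rewrite /restrict !inE.
by [].
Qed.

Lemma theta_sig (P : pred T) (S : {set T}) : (forall x, (x \in S) = P x) ->
  (theta (fun x y : {x : T | P x} => G (val x) (val y)) <= thetaS S)%R.
Proof.
move=> SP; set G' := fun x y : {x : T | P x} => G (val x) (val y).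
have cV : #|{: {x : T | P x}}| = #|S|.
  by rewrite card_sig; apply: eq_card => x; rewrite !inE SP.
have cE : #|edges G'| <= #|edgesS S|.
  rewrite -(card_imset _ (imset_inj val_inj)); apply: subset_leq_card.
  apply/subsetP => e /imsetP [e' /[!inE] /existsP [x /existsP [y /andP [Gxy /eqP ->]]] ->].
  rewrite imsetU1 imset_set1; apply/andP; split.
    by have := in_edges Gxy; rewrite inE.
  apply/subsetP => z; rewrite !inE => /orP [/eqP -> | /eqP ->]; by rewrite SP (valP _).
have cC : ncomp G' = ncompS S.
  have symG' : connect_sym G'.
    by apply: sym_connect_sym => x y; rewrite /G' Gsym.
  have adj : rel_adjunction val (restrict S) G' S.
    apply: strict_adjunction => //.
    - exact: restrict_closed.
    - exact: val_inj.
    - apply/subsetP => x; rewrite SP => Px; apply/codomP.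
      by exists (exist _ x Px).
    - by move=> x y /= _; rewrite /restrict /G' !SP (valP x) (valP y).
  rewrite /ncompS (adjunction_n_comp val (@restrict_sym S) symG' (@restrict_closed S) adj).
  rewrite /ncomp; apply: eq_n_comp_r => x; by rewrite !inE SP (valP x).
rewrite /theta /thetaS cV cC.
move: cE; move: #|edges G'| #|edgesS S| #|S| (ncompS S) => a b c d; lia.
Qed.

Lemma cycle_nbrs (u v : T) : (forall y, G u y -> y = v) -> on_cycle G v ->
  exists a b, [/\ a != b, a \in ~: [set u; v], b \in ~: [set u; v] &
    [/\ G v a, G v b & connect (restrict (~: [set u; v])) a b]].
Proof.
move=> pu [p [up sp cp]].
move: cp; rewrite /cycle rcons_path => /andP [pth Gk].
move: up => /= /andP [vp up].
have unp : u \notin p.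
  apply/negP => up'; move: pth sp vp; case/splitPr: up' => p1 p2.
  rewrite cat_path /= => /andP [_ /andP [G1 p2p]] sp vp.
  case: p2 p2p sp vp => [|y p2] /=; last first.
    move=> /andP [/pu yv _] _; by rewrite mem_cat !inE yv eqxx !orbT.
  case: p1 G1 => [|y p1] /=; first by move=> _ _; rewrite ltnn.
  rewrite Gsym => /pu lv _ _ /negP; apply.
  have := mem_last y p1; rewrite lv inE => /orP [/eqP -> | vp1]; first exact: mem_head.
  by rewrite inE mem_cat vp1 orbT.
have inS : forall w, w \in p -> w \in ~: [set u; v].
  move=> w wp; rewrite !inE negb_or; apply/andP; split.
    by apply: contraNneq unp => <-.
  by apply: contraNneq vp => <-.
case: p sp pth Gk vp up unp inS => [//|x1 p1] sp /= /andP [Gv1 pth] Gk vp up unp inS.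
have xkp : last x1 p1 \in p1.
  by case: p1 sp up pth Gk {inS vp unp} => [//|y p1] _ _ _ _ /=; exact: mem_last.
exists x1, (last x1 p1); split.
- by apply: contraNneq (andP up).1 => ->.
- by apply: inS; exact: mem_head.
- by apply: inS; rewrite inE xkp orbT.
split => //; first by rewrite Gsym.
apply: (path_connect (p := p1)); last exact: mem_last.
apply: (sub_in_path (P := fun w => w \in ~: [set u; v]) (e := G)).
- by move=> w1 w2 h1 h2 g; rewrite /restrict h1 h2 g.
- apply/allP => w wp; apply: inS; exact: wp.
- exact: pth.
Qed.

End Graph.

Section Mx.
Local Open Scope ring_scope.
Variable K : fieldType.

Definition mx2 (T1 T2 : finType) (f : T1 -> T2 -> K) : 'M[K]_(#|T1|, #|T2|) :=
  \matrix_(i, j) f (enum_val i) (enum_val j).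
Definition rk (T1 T2 : finType) (f : T1 -> T2 -> K) : nat := \rank (mx2 f).

Lemma sum_enum (T : finType) (F : T -> K) :
  \sum_(i < #|T|) F (enum_val i) = \sum_y F y.
Proof.
rewrite -(big_enum_val (A := T)) /=. by apply: eq_bigl => y; rewrite inE.
Qed.

Lemma mx2_mul (T1 T2 T3 : finType) (f : T1 -> T2 -> K) (g : T2 -> T3 -> K) :
  mx2 f *m mx2 g = mx2 (fun x z => \sum_y f x y * g y z).
Proof.
apply/matrixP => i k; rewrite !mxE.
rewrite -(sum_enum (fun y => f (enum_val i) y * g y (enum_val k))).
by apply: eq_bigr => j _; rewrite !mxE.
Qed.

Lemma rk_ext (T1 T2 : finType) (f g : T1 -> T2 -> K) :
  (forall x y, f x y = g x y) -> rk f = rk g.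
Proof.
move=> E; rewrite /rk; congr (\rank _); apply/matrixP => i j; by rewrite !mxE E.
Qed.

Lemma rk_mull (T1 T2 T3 : finType) (f : T1 -> T2 -> K) (g : T2 -> T3 -> K) :
  leq (rk (fun x z => \sum_y f x y * g y z)) (rk f).
Proof. by rewrite /rk -mx2_mul mxrankM_maxl. Qed.

Lemma rk_mulr (T1 T2 T3 : finType) (f : T1 -> T2 -> K) (g : T2 -> T3 -> K) :
  leq (rk (fun x z => \sum_y f x y * g y z)) (rk g).
Proof. by rewrite /rk -mx2_mul mxrankM_maxr. Qed.

Lemma rk_add (T1 T2 : finType) (f g : T1 -> T2 -> K) :
  leq (rk (fun x y => f x y + g x y)) (rk f + rk g).
Proof.
rewrite /rk; have -> : mx2 (fun x y => f x y + g x y) = mx2 f + mx2 g.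
  by apply/matrixP => i j; rewrite !mxE.
exact: mxrank_add.
Qed.

Lemma rk_outer (T1 T2 : finType) (c : T1 -> K) (d : T2 -> K) :
  leq (rk (fun x y => c x * d y)) 1.
Proof.
have E := rk_mull (fun x (_ : unit) => c x) (fun _ y => d y).
rewrite (rk_ext (g := fun x y => c x * d y)) in E; last first.
  by move=> x y; rewrite big_const card_unit /= addr0.
apply: leq_trans E _; apply: leq_trans (rank_leq_col _) _; by rewrite card_unit.
Qed.

Lemma sum_single (T : finType) (s : T) (F : T -> K) :
  \sum_y (s == y)%:R * F y = F s.
Proof.
rewrite (bigD1 s) //= eqxx mul1r big1 ?addr0 // => y /negbTE ys.
by rewrite eq_sym ys mul0r.
Qed.

Lemma sum_single_r (T : finType) (s : T) (F : T -> K) :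
  \sum_y F y * (y == s)%:R = F s.
Proof.
rewrite -[RHS](sum_single s); apply: eq_bigr => y _; by rewrite mulrC eq_sym.
Qed.

Lemma rk_scale (T1 T2 : finType) (f : T1 -> T2 -> K) (m : T1 -> K) (m' : T2 -> K) :
  leq (rk (fun x y => m x * f x y * m' y)) (rk f).
Proof.
pose L := fun (x x' : T1) => (x == x')%:R * m x.
pose R := fun (y' y : T2) => (y' == y)%:R * m' y.
have E1 := rk_mull f R.
have E2 := rk_mulr L (fun x z => \sum_y f x y * R y z).
apply: leq_trans E1; apply: leq_trans E2; apply: eq_leq; apply: rk_ext => x y.
rewrite /L /R.
under [in RHS]eq_bigr do rewrite (mulrC _ (m _)) -mulrA.
rewrite -big_distrr /= sum_single.
under [in RHS]eq_bigr do rewrite mulrA.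
by rewrite -big_distrl /= sum_single_r mulrA.
Qed.

Lemma rk_comp (T T' : finType) (h : T' -> T) (f : T -> T -> K) :
  leq (rk (fun x y => f (h x) (h y))) (rk f).
Proof.
pose L := fun (x : T') (s : T) => (h x == s)%:R : K.
pose R := fun (t : T) (y : T') => (t == h y)%:R : K.
have E1 := rk_mull f R.
have E2 := rk_mulr L (fun x z => \sum_y f x y * R y z).
apply: leq_trans E1; apply: leq_trans E2; apply: eq_leq; apply: rk_ext => x y.
by rewrite /L /R; under [in RHS]eq_bigr do rewrite sum_single_r; rewrite sum_single.
Qed.

Lemma mx2_eq0 (T1 T2 : finType) (f : T1 -> T2 -> K) :
  (forall x y, f x y = 0) -> mx2 f = 0.
Proof. by move=> E; apply/matrixP => i j; rewrite !mxE E. Qed.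

Lemma rk0 (T1 T2 : finType) (f : T1 -> T2 -> K) :
  (forall x y, f x y = 0) -> rk f = 0%N.
Proof. by move=> E; rewrite /rk mx2_eq0 // mxrank0. Qed.

Lemma rk_nz (T1 T2 : finType) (f : T1 -> T2 -> K) u v :
  f u v != 0 -> leq 1 (rk f).
Proof.
move=> nz; rewrite lt0n /rk mxrank_eq0; apply/negP => /eqP /matrixP E.
move: (E (enum_rank u) (enum_rank v)); rewrite !mxE !enum_rankK => E'.
by rewrite E' eqxx in nz.
Qed.

Lemma rk_disj (T1 T2 : finType) (g h : T1 -> T2 -> K) (Z1 : {set T1}) (Z2 : {set T2}) :
  (forall s t, s \notin Z1 -> g s t = 0) ->
  (forall s t, t \notin Z2 -> g s t = 0) ->
  (forall s t, s \in Z1 -> h s t = 0) ->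
  (forall s t, t \in Z2 -> h s t = 0) ->
  leq (rk g + rk h) (rk (fun s t => g s t + h s t)).
Proof.
move=> g1 g2 h1 h2.
set M := mx2 (fun s t => g s t + h s t).
pose P1 := fun (x x' : T1) => (x == x')%:R * (x \in Z1)%:R : K.
pose P2 := fun (x x' : T1) => (x == x')%:R * (x \notin Z1)%:R : K.
pose Q := fun (t t' : T2) => (t == t')%:R * (t' \notin Z2)%:R : K.
have eA : mx2 g = mx2 P1 *m M.
  rewrite mx2_mul; apply/matrixP => i j; rewrite !mxE /P1.
  under eq_bigr do rewrite (mulrC _ (_%:R)) -mulrA.
  rewrite -big_distrr /= sum_single; case: (boolP (_ \in Z1)) => Hz.
    by rewrite mul1r h1 // addr0.
  by rewrite mul0r g1.
have eB : mx2 h = mx2 P2 *m M.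
  rewrite mx2_mul; apply/matrixP => i j; rewrite !mxE /P2.
  under eq_bigr do rewrite (mulrC _ (_%:R)) -mulrA.
  rewrite -big_distrr /= sum_single; case: (boolP (_ \in Z1)) => Hz /=.
    by rewrite mul0r h1.
  by rewrite mul1r g1 // add0r.
have AQ : mx2 g *m mx2 Q = 0.
  rewrite mx2_mul; apply/matrixP => i j; rewrite !mxE /Q.
  under eq_bigr do rewrite mulrA.
  rewrite -big_distrl /= sum_single_r; case: (boolP (_ \in Z2)) => Hz /=.
    by rewrite mulr0.
  by rewrite mulr1 g2.
have BQ : mx2 h *m mx2 Q = mx2 h.
  rewrite mx2_mul; apply/matrixP => i j; rewrite !mxE /Q.
  under eq_bigr do rewrite mulrA.
  rewrite -big_distrl /= sum_single_r; case: (boolP (_ \in Z2)) => Hz /=.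
    by rewrite mulr0 h2.
  by rewrite mulr1.
have W0 : (mx2 g :&: mx2 h)%MS = 0.
  have /submxP [D eD] := capmxSl (mx2 g) (mx2 h).
  have /submxP [D' eD'] := capmxSr (mx2 g) (mx2 h).
  have : (mx2 g :&: mx2 h)%MS *m mx2 Q = 0 by rewrite eD -mulmxA AQ mulmx0.
  by rewrite {1}eD' -mulmxA BQ -eD'.
have := mxrank_sum_cap (mx2 g) (mx2 h); rewrite W0 mxrank0 addn0 /rk => <-.
apply: mxrankS; rewrite addsmx_sub; apply/andP; split.
  by rewrite eA submxMl.
by rewrite eB submxMl.
Qed.

Definition mask (T : finType) (S : {set T}) (f : T -> T -> K) : T -> T -> K :=
  fun s t => if (s \in S) && (t \in S) then f s t else 0.

Lemma rk_mask_sub (T : finType) (S S' : {set T}) (f : T -> T -> K) :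
  S' \subset S -> leq (rk (mask S' f)) (rk (mask S f)).
Proof.
move=> sub; apply: leq_trans (rk_scale (mask S f) (fun s => (s \in S')%:R) (fun s => (s \in S')%:R)).
apply: eq_leq; apply: rk_ext => x y; rewrite /mask.
case: (boolP (x \in S')) => hx; case: (boolP (y \in S')) => hy /=;
  rewrite ?mul0r ?mulr0 ?mul1r ?mulr1 //.
by rewrite (subsetP sub x hx) (subsetP sub y hy).
Qed.

Lemma rk_mask_del (T : finType) (S : {set T}) x (f : T -> T -> K) :
  leq (rk (mask S f)) (rk (mask (S :\ x) f) + 2).
Proof.
pose g1 := fun s t => mask (S :\ x) f s t + (s == x)%:R * mask S f x t.
pose g := fun s t => g1 s t + (mask S f s x * (s != x)%:R) * (t == x)%:R.
have -> : rk (mask S f) = rk g.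
  apply: rk_ext => s t; rewrite /g /g1 /mask !inE.
  case: (eqVneq s x) => [->|sx] /=; first by rewrite add0r mul1r mulr0 mul0r addr0.
  rewrite mul0r addr0 mulr1; case: (eqVneq t x) => [->|tx] /=.
    by rewrite andbF add0r mulr1.
  by rewrite mulr0 addr0.
have A1 : leq (rk g1) (rk (mask (S :\ x) f) + 1).
  apply: leq_trans (rk_add _ _) _; rewrite leq_add2l.
  exact: (rk_outer (fun s => (s == x)%:R) (fun t => mask S f x t)).
apply: leq_trans (rk_add _ _) _.
apply: leq_trans (leq_add A1 (rk_outer (fun s => mask S f s x * (s != x)%:R) (fun t => (t == x)%:R))) _; by rewrite -addnA.
Qed.

Lemma rk_mask_iso (T : finType) (S : {set T}) x (f : T -> T -> K) :
  (forall t, t \in S -> f x t = 0 /\ f t x = 0) ->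
  rk (mask S f) = rk (mask (S :\ x) f).
Proof.
move=> H; apply: rk_ext => s t; rewrite /mask !inE.
case: (eqVneq s x) => [->|sx] /=.
  by case: (boolP (x \in S)) => //= xS; case: (boolP (t \in S)) => // /H [].
case: (eqVneq t x) => [->|tx] /=; last by [].
by rewrite andbF; case: (boolP (s \in S)) => // /H []; case: (x \in S).
Qed.

Lemma sumL (T : finType) (s u : T) (k : K) (G : T -> K) :
  \sum_y ((s == y)%:R - k * (y == u)%:R) * G y = G s - k * G u.
Proof.
under eq_bigr do rewrite mulrBl.
rewrite sumrB sum_single; congr (_ - _).
under eq_bigr do rewrite -mulrA.
by rewrite -big_distrr /=; congr (_ * _); rewrite -(sum_single u); apply: eq_bigr => y _;
  rewrite eq_sym.
Qed.

Lemma sumR (T : finType) (t u : T) (k : K) (G : T -> K) :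
  \sum_z G z * ((z == t)%:R - (z == u)%:R * k) = G t - G u * k.
Proof.
under eq_bigr do rewrite mulrBr.
rewrite sumrB sum_single_r; congr (_ - _).
under eq_bigr do rewrite mulrA.
by rewrite -big_distrl /= sum_single_r.
Qed.

Lemma rk_pendant (T : finType) (Z : {set T}) (f : T -> T -> K) u v :
  u \notin Z -> v \notin Z -> u != v ->
  (forall t, t != v -> f u t = 0) -> (forall s, s != v -> f s u = 0) ->
  f u v != 0 -> f v u != 0 ->
  (forall s t, s \notin Z -> s != u -> s != v -> f s t = 0) ->
  (forall s t, t \notin Z -> t != u -> t != v -> f s t = 0) ->
  rk f = (rk (mask Z f) + 2)%N.
Proof.
move=> uZ vZ uv hu hu' al be zr zc.
set a := f u v; set b := f v u.
have fu : forall t, f u t = (t == v)%:R * a.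
  move=> t; case: (eqVneq t v) => [->|tv]; first by rewrite mul1r.
  by rewrite mul0r hu.
have fu' : forall s, f s u = (s == v)%:R * b.
  move=> s; case: (eqVneq s v) => [->|sv]; first by rewrite mul1r.
  by rewrite mul0r hu'.
have vu : v != u by rewrite eq_sym.
apply/eqP; rewrite eqn_leq; apply/andP; split.
-
  pose c := fun s => (s \in Z)%:R * f s v / a.
  pose g1 := fun s t => mask Z f s t + ((s == u)%:R + c s) * ((t == v)%:R * a).
  pose g := fun s t => g1 s t + (s == v)%:R * f v t.
  have -> : rk f = rk g.
    apply: rk_ext => s t; rewrite /g /g1 /c /mask.
    case: (eqVneq s u) => [->|su].
      by rewrite (negbTE uZ) (negbTE uv) /= fu; ring.
    case: (eqVneq s v) => [->|sv].
      by rewrite (negbTE vZ) /=; ring.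
    case: (boolP (s \in Z)) => sZ /=; last by rewrite zr //; ring.
    case: (eqVneq t v) => [->|tv] /=.
      by rewrite (negbTE vZ) /=; field; rewrite al.
    case: (boolP (t \in Z)) => tZ /=; first by ring.
    case: (eqVneq t u) => [->|tu]; first by rewrite hu' //; ring.
    by rewrite zc //; ring.
  have A1 : leq (rk g1) (rk (mask Z f) + 1).
    apply: leq_trans (rk_add _ _) _; rewrite leq_add2l.
    exact: (rk_outer (fun s => (s == u)%:R + c s) (fun t => (t == v)%:R * a)).
  apply: leq_trans (rk_add _ _) _.
  apply: leq_trans (leq_add A1 (rk_outer (fun s => (s == v)%:R) (fun t => f v t))) _.
  by rewrite -addnA.
-
  pose h := fun s t => (s == u)%:R * ((t == v)%:R * a) + (s == v)%:R * ((t == u)%:R * b).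
  have Hh : leq 2 (rk h).
    have H : leq (rk (fun s t => (s == u)%:R * ((t == v)%:R * a)) +
                  rk (fun s t => (s == v)%:R * ((t == u)%:R * b))) (rk h).
      apply: (rk_disj (Z1 := [set u]) (Z2 := [set v])).
    + by move=> s t; rewrite inE => /negbTE ->; rewrite mul0r.
    + by move=> s t; rewrite inE => /negbTE ->; rewrite mul0r mulr0.
    + by move=> s t; rewrite inE => /eqP ->; rewrite (negbTE uv) mul0r.
    + by move=> s t; rewrite inE => /eqP ->; rewrite (negbTE vu) mul0r mulr0.
    apply: leq_trans H; rewrite (_ : 2 = 1 + 1)%N //; apply: leq_add.
      by apply: (rk_nz (u := u) (v := v)); rewrite !eqxx !mul1r.
    by apply: (rk_nz (u := v) (v := u)); rewrite !eqxx !mul1r.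
  have Hd : leq (rk (mask Z f) + rk h) (rk (fun s t => mask Z f s t + h s t)).
    apply: (rk_disj (Z1 := Z) (Z2 := Z)).
    + by move=> s t /negbTE sZ; rewrite /mask sZ.
    + by move=> s t /negbTE tZ; rewrite /mask tZ andbF.
    + move=> s t sZ; rewrite /h.
      have /negbTE -> : s != u by apply: contraNneq uZ => <-.
      have /negbTE -> : s != v by apply: contraNneq vZ => <-.
      by rewrite !mul0r addr0.
    + move=> s t tZ; rewrite /h.
      have /negbTE -> : t != u by apply: contraNneq uZ => <-.
      have /negbTE -> : t != v by apply: contraNneq vZ => <-.
      by rewrite !mul0r !mulr0 addr0.
  pose c := fun s => (s \in Z)%:R * f s v / a.
  pose d := fun t => (t != u)%:R * f v t / b.
  pose L := fun s y => (s == y)%:R - c s * (y == u)%:R.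
  pose R := fun z t => (z == t)%:R - (z == u)%:R * d t.
  have E1 := rk_mull f R.
  have E2 := rk_mulr L (fun x z => \sum_y f x y * R y z).
  have E3 : rk (fun s t => mask Z f s t + h s t) =
            rk (fun x z => \sum_y L x y * \sum_y0 f y y0 * R y0 z).
    apply: rk_ext => s t; rewrite /L /R.
    under [in RHS]eq_bigr do rewrite sumR.
    rewrite sumL fu fu' /mask /h /c /d (hu u uv).
    case: (eqVneq s u) => [->|su].
      by rewrite (negbTE uZ) (negbTE uv) /= fu; ring.
    case: (eqVneq s v) => [->|sv].
      rewrite (negbTE vZ) /=.
      case: (eqVneq t u) => [->|tu] /=; first by rewrite -/b; ring.
      by field; rewrite be al.
    case: (boolP (s \in Z)) => sZ /=; last by rewrite zr //; ring.
    case: (eqVneq t v) => [->|tv] /=.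
      by rewrite (negbTE vZ) /=; field; rewrite ?al ?be.
    case: (boolP (t \in Z)) => tZ /=; first by ring.
    case: (eqVneq t u) => [->|tu]; first by rewrite hu' //; ring.
    by rewrite zc //; ring.
  apply: leq_trans (leq_add (leqnn (rk (mask Z f))) Hh) _.
  apply: leq_trans Hd _; rewrite E3; exact: leq_trans E2 E1.
Qed.

Lemma sum_sig (T : finType) (P : pred T) (s : T) (F : {x : T | P x} -> K) (Ps : P s) :
  \sum_(x : {x : T | P x}) (s == val x)%:R * F x = F (exist _ s Ps).
Proof.
rewrite (bigD1 (exist _ s Ps)) //= eqxx mul1r big1 ?addr0 // => x xn.
case: (eqVneq s (val x)) => [E|]; last by rewrite mul0r.
move: xn; case: x E => x0 px /= E; subst x0; by rewrite (bool_irrelevance px Ps) eqxx.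
Qed.

Lemma sum_sig0 (T : finType) (P : pred T) (s : T) (F : {x : T | P x} -> K) :
  ~~ P s -> \sum_(x : {x : T | P x}) (s == val x)%:R * F x = 0.
Proof.
move=> nP; rewrite big1 // => x _; case: (eqVneq s (val x)) => [E|]; last by rewrite mul0r.
by move: nP; rewrite E (valP x).
Qed.

Lemma rk_sig (T : finType) (P : pred T) (S : {set T}) (f : T -> T -> K) :
  (forall x, (x \in S) = P x) ->
  rk (fun x y : {x : T | P x} => f (val x) (val y)) = rk (mask S f).
Proof.
move=> SP; apply/eqP; rewrite eqn_leq; apply/andP; split.
  apply: leq_trans (rk_comp val (mask S f)).
  by apply: eq_leq; apply: rk_ext => x y; rewrite /mask !SP (valP x) (valP y).
pose E := fun (s : T) (x : {x : T | P x}) => (s == val x)%:R : K.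
pose E' := fun (y : {x : T | P x}) (t : T) => (val y == t)%:R : K.
pose f' := fun x y : {x : T | P x} => f (val x) (val y).
have E1 := rk_mull f' E'.
have E2 := rk_mulr E (fun x z => \sum_y f' x y * E' y z).
apply: leq_trans E1; apply: leq_trans E2; apply: eq_leq; apply: rk_ext => s t.
rewrite /mask !SP; case: (boolP (P s)) => Ps /=; last by rewrite sum_sig0.
rewrite sum_sig; case: (boolP (P t)) => Pt /=.
  rewrite /f' /E' -(sum_sig (fun y => f s (val y)) Pt).
  by apply: eq_bigr => y _; rewrite mulrC eq_sym.
rewrite /E' big1 // => y _; case: (eqVneq (val y) t) => [E0|]; last by rewrite mulr0.
by move: Pt; rewrite -E0 (valP y).
Qed.

End Mx.

Section Bound.
Variable C : numClosedFieldType.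
Variable T : finType.
Variable G : rel T.
Hypothesis Gsym : symmetric G.
Hypothesis Girr : irreflexive G.

Definition ga (phi : T -> T -> C) : T -> T -> C :=
  fun x y => if G x y then phi x y else 0%R.

Lemma ga_nz (phi : T -> T -> C) x y : unit_gain G phi -> G x y -> ga phi x y != 0%R.
Proof.
move=> ug Gxy; rewrite /ga Gxy; have [n1 _] := ug x y Gxy.
by apply/eqP => E; move: n1; rewrite E normr0 => /eqP; rewrite eq_sym oner_eq0.
Qed.

Lemma ga_z (phi : T -> T -> C) x y : ~~ G x y -> ga phi x y = 0%R.
Proof. by rewrite /ga => /negbTE ->. Qed.

Lemma pendant_rk (phi : T -> T -> C) (S : {set T}) u v :
  unit_gain G phi -> u \in S -> v \in S -> G u v ->
  (forall t, t \in S -> G u t -> t = v) ->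
  rk (mask S (ga phi)) = (rk (mask (S :\: [set u; v]) (mask S (ga phi))) + 2)%N.
Proof.
move=> ug uS vS Guv pu.
have uv : u != v by apply: contraTneq Guv => ->; rewrite Girr.
apply: (rk_pendant (u := u) (v := v)).
- by rewrite in_setD in_set2 eqxx.
- by rewrite in_setD in_set2 eqxx orbT.
- exact: uv.
- move=> t tv; rewrite /mask uS /=; case: (boolP (t \in S)) => //= tS.
  by rewrite ga_z //; apply: contra tv => /(pu _ tS) ->.
- move=> s sv; rewrite /mask uS andbT; case: (boolP (s \in S)) => //= sS.
  by rewrite ga_z // Gsym; apply: contra sv => /(pu _ sS) ->.
- by rewrite /mask uS vS /= ga_nz.
- by rewrite /mask uS vS /= ga_nz // Gsym.
- move=> s t; rewrite !inE => H su sv; move: H; rewrite (negbTE su) (negbTE sv) /= => sS.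
  by rewrite /mask (negbTE sS).
- move=> s t; rewrite !inE => H su sv; move: H; rewrite (negbTE su) (negbTE sv) /= => sS.
  by rewrite /mask (negbTE sS) andbF.
Qed.

Lemma mask_mask (f : T -> T -> C) (Z S : {set T}) : Z \subset S ->
  rk (mask Z (mask S f)) = rk (mask Z f).
Proof.
move=> ZS; apply: rk_ext => s t; rewrite /mask.
case: (boolP (s \in Z)) => sZ //=; case: (boolP (t \in Z)) => tZ //=.
by rewrite (subsetP ZS s sZ) (subsetP ZS t tZ).
Qed.

Lemma bound (phi1 phi2 : T -> T -> C) :
  unit_gain G phi1 -> unit_gain G phi2 -> forall S : {set T},
  ((rk (mask S (ga phi1)))%:Z <= (rk (mask S (ga phi2)))%:Z + 2 * thetaS G S)%R.
Proof.
move=> ug1 ug2 S.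
move: {2}#|S| (leqnn #|S|) => n; elim: n S => [|n IH] S hS.
  have -> : S = set0 by apply/eqP; rewrite -cards_eq0 -leqn0.
  rewrite !rk0; try by move=> x y; rewrite /mask inE.
  rewrite /thetaS cards0.
  move: #|edgesS G set0| (ncompS G set0) => a b; lia.
have smaller : forall S' : {set T}, S' \proper S -> #|S'| <= n.
  by move=> S' h; have := proper_card h; move: hS; lia.
case: (classic (exists x a b, [/\ x \in S, a != b, a \in S :\ x & b \in S :\ x] /\
     [/\ G x a, G x b & connect (restrict G (S :\ x)) a b])).
  move=> [x [a [b [[xS ab aS bS] [Ga Gb cab]]]]].
  have th := theta_add_strict Gsym (negbT (setD11 x S)) ab aS bS Ga Gb cab.
  rewrite setD1K // in th.
  have r1 := rk_mask_del S x (ga phi1).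
  have r2 := rk_mask_sub (ga phi2) (subD1set S x).
  have ih := IH (S :\ x) (smaller _ (properD1 xS)).
  move: th r1 r2 ih; move: (thetaS G S) (thetaS G (S :\ x)).
  move: (rk (mask S (ga phi1))) (rk (mask (S :\ x) (ga phi1))).
  move: (rk (mask S (ga phi2))) (rk (mask (S :\ x) (ga phi2))) => a1 a2 a3 a4 t1 t2.
  lia.
move=> nA.
case: (classic (exists x, x \in S /\ #|nbrs G S x| = 0)).
  move=> [x [xS n0]].
  have iso : forall t, t \in S -> G x t = false.
    move=> t tS; apply/negP => Gt; move: n0 => /eqP; rewrite cards_eq0 => /eqP /setP /(_ t).
    by rewrite !inE tS Gt.
  have th := theta_add Gsym (negbT (setD11 x S)); rewrite setD1K // in th.
  have e1 : forall phi, rk (mask S (ga phi)) = rk (mask (S :\ x) (ga phi)).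
    move=> phi; apply: rk_mask_iso => t tS.
    by rewrite !ga_z // ?iso // Gsym iso.
  have ih := IH (S :\ x) (smaller _ (properD1 xS)).
  rewrite !e1.
  move: th ih; move: (thetaS G S) (thetaS G (S :\ x)).
  move: (rk (mask (S :\ x) (ga phi1))) (rk (mask (S :\ x) (ga phi2))) => a1 a2 t1 t2.
  lia.
move=> nB.
case: (classic (exists x, x \in S /\ #|nbrs G S x| = 1%N)).
  move=> [u [uS /eqP /cards1P [v nv]]].
  have vN : v \in nbrs G S u by rewrite nv inE.
  move: (vN); rewrite inE => /andP [vS Guv].
  have pu : forall t, t \in S -> G u t -> t = v.
    by move=> t tS Gt; apply/set1P; rewrite -nv inE tS Gt.
  have uv : u != v by apply: contraTneq Guv => ->; rewrite Girr.
  set Z := S :\: [set u; v].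
  have ZS : Z \subset S by apply: subsetDl.
  have e1 : forall phi, unit_gain G phi ->
      rk (mask S (ga phi)) = (rk (mask Z (ga phi)) + 2)%N.
    by move=> phi ug; rewrite (pendant_rk ug uS vS Guv pu) mask_mask.
  have vZ : v \notin Z by rewrite in_setD in_set2 eqxx orbT.
  have uZ : u \notin v |: Z by rewrite in_setU1 in_setD in_set2 eqxx (negbTE uv).
  have th1 := theta_add Gsym vZ.
  have th2 := theta_add Gsym uZ.
  have eS : u |: (v |: Z) = S.
    apply/setP => z; rewrite !inE; case: (eqVneq z u) => [-> | zu] //=.
    case: (eqVneq z v) => [-> | zv] //=.
  rewrite eS in th2.
  have ZP : Z \proper S.
    rewrite properEneq ZS andbT; apply/eqP => E; move: uS; rewrite -E in_setD in_set2 eqxx.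
    by [].
  have ih := IH Z (smaller _ ZP).
  rewrite (e1 _ ug1) (e1 _ ug2).
  move: th1 th2 ih; move: (thetaS G S) (thetaS G Z) (thetaS G (v |: Z)).
  move: (rk (mask Z (ga phi1))) (rk (mask Z (ga phi2))) => a1 a2 t1 t2 t3.
  lia.
move=> nC.
case: (eqVneq S set0) => [S0 | Sn].
  rewrite S0 !rk0; try by move=> x y; rewrite /mask inE.
  rewrite /thetaS cards0.
  move: #|edgesS G set0| (ncompS G set0) => a b; lia.
exfalso; apply: nA; apply: exists_cyc => // x xS.
case: (#|nbrs G S x|) (fun h => nB (ex_intro _ x (conj xS h)))
   (fun h => nC (ex_intro _ x (conj xS h))) => [|[|k]] h0 h1 //.
all: by [exfalso; apply: h0 | exfalso; apply: h1].
Qed.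

End Bound.

Lemma rk_maskT (K : fieldType) (T : finType) (f : T -> T -> K) : rk (mask setT f) = rk f.
Proof. by apply: rk_ext => x y; rewrite /mask !inE. Qed.


Unset Implicit Arguments.
Local Open Scope ring_scope.

Theorem theorem4p2 (R : realType) (T : finType) (G : rel T)
    (phi : T -> T -> R[i]) (u v : T) :
  simple_graph G -> unit_gain G phi ->
  degree G u = 1%N -> G u v ->
  let F := del2_graph u v G in
  let Fphi := del2_gain u v phi in
  ((gain_rank G phi)%:Z = (graph_rank R[i] G)%:Z + 2 * theta G ->
     ~ on_cycle G v /\
     (gain_rank F Fphi)%:Z = (graph_rank R[i] F)%:Z + 2 * theta F) /\
  ((gain_rank G phi)%:Z = (graph_rank R[i] G)%:Z - 2 * theta G ->
     ~ on_cycle G v /\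
     (gain_rank F Fphi)%:Z = (graph_rank R[i] F)%:Z - 2 * theta F).
Proof.
move=> [Gsym Girr] ug du Guv F Fphi.
have pu : forall y, G u y -> y = v.
  move=> y Gy; move: du => /eqP /cards1P [w Hw].
  have : v \in [set y | G u y] by rewrite inE.
  rewrite Hw inE => /eqP ->.
  have : y \in [set y | G u y] by rewrite inE.
  by rewrite Hw inE => /eqP.
have ug1 : unit_gain G (fun _ _ => 1 : R[i]).
  by move=> x y _; rewrite normr1 conjC1.
set Z := ~: [set u; v].
have ZP : forall x, (x \in Z) = (x \notin [set u; v]) by move=> x; rewrite in_setC.
have pend : forall phi0 : T -> T -> R[i], unit_gain G phi0 ->
    rk (ga G phi0) = (rk (mask Z (ga G phi0)) + 2)%N.
  move=> phi0 ug0; rewrite -rk_maskT.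
  rewrite (pendant_rk Gsym Girr ug0 (in_setT u) (in_setT v) Guv) ?mask_mask ?setTD //.
  by move=> t _; apply: pu.
have rA : gain_rank G phi = rk (ga G phi) by [].
have rB : graph_rank R[i] G = rk (ga G (fun _ _ => 1 : R[i])) by [].
have rAF : gain_rank F Fphi = rk (mask Z (ga G phi)).
  by rewrite -(rk_sig _ ZP).
have rBF : graph_rank R[i] F = rk (mask Z (ga G (fun _ _ => 1 : R[i]))).
  by rewrite -(rk_sig _ ZP).
have FGsym : symmetric F by move=> x y; apply: Gsym.
have Firr : irreflexive F by move=> x; apply: Girr.
have ugF : unit_gain F Fphi by move=> x y h; apply: ug.
have ugF1 : unit_gain F (fun _ _ => 1 : R[i]) by move=> x y _; rewrite normr1 conjC1.
have bd1 := bound (G := F) FGsym Firr ugF ugF1 setT.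
have bd2 := bound (G := F) FGsym Firr ugF1 ugF setT.
rewrite !rk_maskT -(theta_setT F) in bd1 bd2.
have eA : gain_rank F Fphi = rk (ga F Fphi) by [].
have eB : graph_rank R[i] F = rk (ga F (fun _ _ => 1 : R[i])) by [].
rewrite -eA -eB in bd1 bd2.
have thF : theta F <= thetaS G Z := theta_sig Gsym ZP.
have vZ : v \notin Z by rewrite ZP !inE eqxx orbT negbK.
have uZ : u \notin v |: Z.
  rewrite in_setU1 ZP !inE eqxx negb_or /=.
  by rewrite andbT; apply: contraTneq Guv => ->; rewrite Girr.
have th1 := theta_add Gsym vZ.
have th2 := theta_add Gsym uZ.
have eS : u |: (v |: Z) = setT.
  apply/setP => z; rewrite !inE; case: (eqVneq z u) => [-> | zu] //=.
  by case: (eqVneq z v).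
rewrite eS -(theta_setT G) in th2.
have cyc : on_cycle G v -> thetaS G Z + 1 <= thetaS G (v |: Z).
  move=> oc; have [a [b [ab aZ bZ [Ga Gb cab]]]] := cycle_nbrs Gsym pu oc.
  have H := theta_add_strict Gsym vZ ab aZ bZ Ga Gb cab; exact H.
rewrite rA rB (pend _ ug) (pend _ ug1) rAF rBF.
rewrite rAF rBF in bd1 bd2.
move: bd1 bd2 thF th1 th2 cyc.
move: (theta F) (theta G) (thetaS G Z) (thetaS G (v |: Z)).
move: (rk (mask Z (ga G phi))) (rk (mask Z (ga G (fun _ _ => 1 : R[i])))).
move=> a1 a2 tF tG tZ tvZ bd1 bd2 thF th1 th2 cyc.
split=> E; split.
- by move=> /cyc; lia.
- lia.
- by move=> /cyc; lia.
- lia.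
Qed.
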